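(* Let $(R,+,\cdot)$ be a finite simple additively idempotent semiring with $|R|>2$ for which there exists a finite idempotent sub-irreducible $R$-semimodule, and suppose its greatest element $\infty_R$ is neither left nor right absorbing. Then $(R,+,\cdot)$ has a zero, i.e., $(R,+)$ has a neutral element which is multiplicatively absorbing.
   Context: A semiring is a nonempty set with a commutative semigroup operation $+$ and a semigroup operation $\cdot$ satisfying both distributive laws; simple if its only congruences are the identity and the full relation; additively idempotent if $r+r=r$, with order $x\le y:\Leftrightarrow x+y=y$ and greatest element $\infty_R=\sum_{r\in R}r$. An element $r$ is right absorbing if $sr=r$ for all $s$, left absorbing if $rs=r$ for all $s$, absorbing if both. An $R$-semimodule is a commutative semigroup $(M,+)$ with an action $R\times M\to M$ satisfying $r(sx)=(rs)x$, $(r+s)x=rx+sx$, $r(x+y)=rx+ry$; idempotent if $x+x=x$. A subsemimodule is a subsemigroup closed under the action. $M$ is quasitrivial if $rx=sx$ for all $r,s,x$; id-quasitrivial if $rx=x$ for all $r,x$; sub-irreducible if not quasitrivial and all proper subsemimodules are id-quasitrivial. *)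

(* Defs.v *)
From mathcomp Require Import all_boot.
Set Implicit Arguments. Unset Strict Implicit. Unset Printing Implicit Defensive.

Definition is_semiring (R : Type) (add mul : R -> R -> R) : Prop :=
  (forall x y z, add x (add y z) = add (add x y) z) /\
  (forall x y, add x y = add y x) /\
  (forall x y z, mul x (mul y z) = mul (mul x y) z) /\
  (forall x y z, mul x (add y z) = add (mul x y) (mul x z)) /\
  (forall x y z, mul (add x y) z = add (mul x z) (mul y z)).

Definition is_congruence (R : Type) (add mul : R -> R -> R) (c : R -> R -> Prop) : Prop :=
  (forall x, c x x) /\ (forall x y, c x y -> c y x) /\
  (forall x y z, c x y -> c y z -> c x z) /\
  (forall x y x' y', c x x' -> c y y' -> c (add x y) (add x' y')) /\
  (forall x y x' y', c x x' -> c y y' -> c (mul x y) (mul x' y')).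

Definition simple_semiring (R : Type) (add mul : R -> R -> R) : Prop :=
  forall c, is_congruence add mul c ->
    (forall x y, c x y <-> x = y) \/ (forall x y, c x y).

Definition add_idempotent (R : Type) (add : R -> R -> R) : Prop :=
  forall x, add x x = x.

Definition add_le (R : Type) (add : R -> R -> R) (x y : R) : Prop := add x y = y.
Definition greatest (R : Type) (add : R -> R -> R) (t : R) : Prop :=
  forall x, add_le add x t.

Definition right_absorbing (R : Type) (mul : R -> R -> R) (r : R) : Prop :=
  forall s, mul s r = r.
Definition left_absorbing (R : Type) (mul : R -> R -> R) (r : R) : Prop :=
  forall s, mul r s = r.
Definition absorbing (R : Type) (mul : R -> R -> R) (r : R) : Prop :=
  left_absorbing mul r /\ right_absorbing mul r.

Definition is_semimodule (R M : Type) (add mul : R -> R -> R)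
    (madd : M -> M -> M) (act : R -> M -> M) : Prop :=
  (forall x y z, madd x (madd y z) = madd (madd x y) z) /\
  (forall x y, madd x y = madd y x) /\
  (forall r s x, act r (act s x) = act (mul r s) x) /\
  (forall r s x, act (add r s) x = madd (act r x) (act s x)) /\
  (forall r x y, act r (madd x y) = madd (act r x) (act r y)).

Definition subsemimodule (R M : Type) (madd : M -> M -> M) (act : R -> M -> M)
    (S : M -> Prop) : Prop :=
  (forall x y, S x -> S y -> S (madd x y)) /\ (forall r x, S x -> S (act r x)).

Definition quasitrivial (R M : Type) (act : R -> M -> M) (S : M -> Prop) : Prop :=
  forall r s x, S x -> act r x = act s x.
Definition id_quasitrivial (R M : Type) (act : R -> M -> M) (S : M -> Prop) : Prop :=
  forall r x, S x -> act r x = x.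

Definition sub_irreducible (R M : Type) (madd : M -> M -> M) (act : R -> M -> M) : Prop :=
  ~ quasitrivial act (fun _ => True) /\
  (forall S : M -> Prop, subsemimodule madd act S -> (exists x, ~ S x) ->
     id_quasitrivial act S).

(* Main.v *)
Require Import Defs.
From mathcomp Require Import all_boot.
From Stdlib Require Import Classical.

Theorem proposition2p24 (R : finType) (add mul : R -> R -> R) (inf : R) :
  is_semiring add mul ->
  simple_semiring add mul ->
  add_idempotent add ->
  2 < #|R| ->
  (exists (M : finType) (madd : M -> M -> M) (act : R -> M -> M),
      is_semimodule add mul madd act /\ add_idempotent madd /\
      sub_irreducible madd act) ->
  greatest add inf ->
  ~ left_absorbing mul inf ->
  ~ right_absorbing mul inf ->
  exists z : R, (forall x, add z x = x) /\ absorbing mul z.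
Proof.
move=> [aA [aC [mA [mDl mDr]]]] Hsimp Hid _
  [M [madd [act [[maA [maC [actM [actD actDr]]]] [_ [Hnq Hsub]]]]]] Hgr Hnl Hnr.
have Hg : forall x, add x inf = inf := Hgr.
have faith : forall r s, (forall x, act r x = act s x) -> r = s.
  case: (Hsimp (fun r s => forall x, act r x = act s x)).
  - split; first by [].
    split; first by move=> a b H x; rewrite H.
    split; first by move=> a b c H1 H2 x; rewrite H1 H2.
    split.
    + by move=> x y x' y' H1 H2 m; rewrite !actD H1 H2.
    + by move=> x y x' y' H1 H2 m; rewrite -!actM H2 H1.
  - by move=> H r s; apply H.
  - move=> H; exfalso; apply: Hnq => r s x _; exact: H.
pose gen x := forall y, exists r, act r x = y.
have top : forall x m, gen x -> madd m (act inf x) = act inf x.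
  move=> x m g; case: (g m) => r <-; by rewrite -actD Hg.
have hRx : forall x, ~ gen x -> forall r s, act r (act s x) = act s x.
  move=> x nx r s.
  have Hs : subsemimodule madd act (fun y => exists r, act r x = y).
    split.
    - move=> y z [r1 <-] [t <-]; exists (add r1 t); by rewrite actD.
    - move=> r1 y [t <-]; exists (mul r1 t); by rewrite actM.
  have [y ny] : exists y, ~ exists r, act r x = y by apply: not_all_ex_not.
  exact: (Hsub _ Hs (ex_intro _ y ny) r (act s x) (ex_intro _ s erefl)).
have Gne : exists x, gen x.
  apply: NNPP => H; apply: Hnr => s; apply: faith => x.
  rewrite -actM; apply: hRx => g; apply: H; by exists x.
have Nfix : forall x, ~ gen x -> forall r, act r x = x.
  have HN : subsemimodule madd act (fun x => ~ gen x).
    split.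
    - move=> x y nx ny gxy; apply: Hnq => r s z _.
      have [t <-] := gxy z.
      by rewrite !actDr !(hRx x nx) !(hRx y ny).
    - move=> r x nx g; apply: nx => z; have [s <-] := g z.
      exists (mul s r); by rewrite actM.
  have Pr : exists x, ~ ~ gen x by case: Gne => x0 g; exists x0.
  move=> x nx r; exact: (Hsub _ HN Pr r x nx).
have dich : forall x, gen x \/ (forall r, act r x = x).
  move=> x; case: (classic (gen x)) => [g|ng]; [by left | right; exact: Nfix].
case: (classic (exists f, forall r, act r f = f)) => [[f0 Hf0]|Hnf]; last first.
  exfalso; apply: Hnl => r; apply: faith => x; rewrite -actM.
  have allg : forall z, gen z.
    move=> z; case: (dich z) => // fz; exfalso; apply: Hnf; by exists z.
  have e1 := top (act r x) (act inf x) (allg _).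
  have e2 := top x (act inf (act r x)) (allg _).
  by rewrite -e1 maC e2.
pose I i := forall x t, act t (act i x) = act i x.
have Hr : forall l : seq M, exists r, forall x, x \in l -> forall t, act t (act r x) = act r x.
  elim => [|x l [s Hs]]; first by exists inf.
  case: (dich (act s x)) => [g | fx].
  - have [t Ht] := g f0. exists (mul t s) => y; rewrite inE => /orP [/eqP -> | yl] t';
      rewrite -!actM.
    + by rewrite Ht Hf0.
    + by rewrite !(Hs y yl).
  - exists s => y; rewrite inE => /orP [/eqP -> | yl]; [exact: fx | exact: Hs].
have [r0 Hr0] := Hr (enum M).
have Ir0 : I r0.
  move=> x t; apply: Hr0; by rewrite mem_enum.
have Iadd : forall i j, I i -> I j -> I (add i j).
  move=> i j Ii Ij x t; by rewrite !actD actDr Ii Ij.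
have Il : forall s i, I i -> I (mul s i).
  move=> s i Ii x t; by rewrite -actM Ii Ii.
have Ir : forall s i, I i -> I (mul i s).
  move=> s i Ii x t; by rewrite -actM Ii.
have nIinf : ~ I inf.
  move=> Iinf; apply: Hnr => t; apply: faith => x; by rewrite -actM Iinf.
have ac4 : forall a b c d, add (add a b) (add c d) = add (add a c) (add b d).
  move=> a b c d; by rewrite -!aA (aA b) (aC b c) -aA.
pose c r s := exists i, I i /\ add r i = add s i.
have ctrans : forall x y z, c x y -> c y z -> c x z.
  move=> x y z [i [Ii e1]] [j [Ij e2]]; exists (add i j); split; first exact: Iadd.
  by rewrite aA e1 -aA (aC i j) aA e2 -aA (aC j i).
have Hc : is_congruence add mul c.
  split; first by move=> x; exists r0.
  split; first by move=> x y [i [Ii e]]; exists i.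
  split; first exact: ctrans.
  split.
  - move=> x y x' y' [i [Ii e1]] [j [Ij e2]]; exists (add i j); split; first exact: Iadd.
    by rewrite [LHS]ac4 [RHS]ac4 e1 e2.
  - move=> x y x' y' [i [Ii e1]] [j [Ij e2]]; apply: (ctrans _ (mul x' y)).
    + exists (mul i y); split; first exact: Ir.
      by rewrite -!mDr e1.
    + exists (mul x' j); split; first exact: Il.
      by rewrite -!mDl e2.
case: (Hsimp c Hc) => [Hidc | Hfull].
- have bot : forall r i, I i -> add r i = r.
    move=> r i Ii; apply/Hidc; exists i; split => //; by rewrite -aA Hid.
  exists r0; split; first by move=> x; rewrite aC bot.
  split.
  + move=> s; rewrite -{1}(bot (mul r0 s) r0 Ir0) aC bot //; exact: Ir.
  + move=> s; rewrite -{1}(bot (mul s r0) r0 Ir0) aC bot //; exact: Il.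
- exfalso; have [i [Ii e]] := Hfull r0 inf.
  apply: nIinf; rewrite -(Hg i) aC -e; exact: Iadd.
Qed.
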